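(* Let $I=\mathcal{M}^0[K,G,K;P]$ be a finite Rees $0$-matrix semigroup with $|K|\ge3$, where $P$ is the $K\times K$ matrix with $p_{\kappa,\kappa}=e$ and $p_{\lambda,\kappa}=0$ for $\lambda\ne\kappa$. Then $\sigma_i(I)=3$.
   Context: $G$ is a finite group with identity $e$. $\mathcal{M}^0[K,G,K;P]$ is $(K\times G\times K)\cup\{0\}$ with $(\kappa,g,\lambda)(\mu,h,\nu)=(\kappa,gp_{\lambda,\mu}h,\nu)$ if $p_{\lambda,\mu}\ne0$, $=0$ otherwise, and $0$ a zero element; it is an inverse semigroup. An inverse subsemigroup is a subsemigroup closed under taking the unique inverse. $\sigma_i(I)$ is the least positive integer $n$ such that $I$ is the union of $n$ proper inverse subsemigroups, or $\infty$ if none exists. *)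

(* Defs.v *)
From mathcomp Require Import all_boot all_fingroup.
Set Implicit Arguments. Unset Strict Implicit. Unset Printing Implicit Defensive.
Local Open Scope group_scope.

(* Rees 0-matrix semigroup M^0[K,G,K;P] over a finite group gT, with the
   sandwich matrix P : K -> K -> option gT (None = 0).  Elements: None = 0,
   Some (k, g, l) = (k, g, l). *)
Definition rees_elt (K : finType) (gT : finGroupType) := option (K * gT * K).

Definition rees_mul (K : finType) (gT : finGroupType) (P : K -> K -> option gT)
  (x y : rees_elt K gT) : rees_elt K gT :=
  match x, y with
  | Some (k, g, l), Some (m, h, n) =>
      match P l m with
      | Some p => Some (k, g * p * h, n)
      | None => None
      end
  | _, _ => None
  end.

Definition diagP (K : finType) (gT : finGroupType) (l k : K) : option gT :=
  if l == k then Some 1 else None.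

(* S is an inverse subsemigroup: nonempty, closed under multiplication, and
   closed under taking (the unique) inverse y of x, i.e. x y x = x, y x y = y. *)
Definition inverse_subsemigroup (T : finType) (mul : T -> T -> T) (S : {set T}) : Prop :=
  S != set0 /\
  (forall x y, x \in S -> y \in S -> mul x y \in S) /\
  (forall x y, x \in S -> mul (mul x y) x = x -> mul (mul y x) y = y -> y \in S).

Definition inv_covered_by (T : finType) (mul : T -> T -> T) (n : nat) : Prop :=
  exists F : 'I_n -> {set T},
    (forall i, inverse_subsemigroup mul (F i) /\ F i != [set: T]) /\
    \bigcup_(i < n) F i = [set: T].

Definition sigma_i_eq (T : finType) (mul : T -> T -> T) (n : nat) : Prop :=
  0 < n /\ inv_covered_by mul n /\
  (forall m, 0 < m -> m < n -> ~ inv_covered_by mul m).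

(* Main.v *)
Require Import Defs.
From mathcomp Require Import all_boot all_fingroup.
From Stdlib Require Import Classical.
Set Implicit Arguments. Unset Strict Implicit. Unset Printing Implicit Defensive.
Local Open Scope group_scope.

Section S.
Variables (K : finType) (gT : finGroupType).
Local Notation T := (rees_elt K gT).
Local Notation mul := (@rees_mul K gT (@diagP K gT)).

Lemma mulSS k g l m h n :
  mul (Some (k,g,l)) (Some (m,h,n)) = if l == m then Some (k, g*h, n) else None.
Proof. rewrite /rees_mul /diagP; case: (l == m) => //; by rewrite mulg1. Qed.

Lemma mulxN (x : T) : mul x None = None.
Proof. by case: x => [[[]]|]. Qed.

Definition full (X : {set T}) k l := forall g, Some (k,g,l) \in X.

Lemma mul_in X (hX : inverse_subsemigroup mul X) x y :
  x \in X -> y \in X -> mul x y \in X.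
Proof. by case: hX => _ [hm _]; apply: hm. Qed.

Lemma inv_in X (hX : inverse_subsemigroup mul X) k g l :
  Some (k,g,l) \in X -> Some (l,g^-1,k) \in X.
Proof.
case: hX => _ [_ hi] H; apply: (hi _ _ H).
  by rewrite mulSS eqxx mulSS eqxx mulgV mul1g.
by rewrite mulSS eqxx mulSS eqxx mulVg mul1g.
Qed.

Section Two.
Variables X Y : {set T}.
Hypothesis hX : inverse_subsemigroup mul X.
Hypothesis hY : inverse_subsemigroup mul Y.
Hypothesis cov : forall x, x \in X \/ x \in Y.

Lemma diag_full k : full X k k \/ full Y k k.
Proof.
case: (boolP [forall g, Some (k,g,k) \in X]) => [/forallP H|/forallPn [g Hg]].
  by left.
case: (boolP [forall h, Some (k,h,k) \in Y]) => [/forallP H|/forallPn [h Hh]].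
  by right.
exfalso.
have gY : Some (k,g,k) \in Y by case: (cov (Some (k,g,k))) => // H; rewrite H in Hg.
have hXX : Some (k,h,k) \in X by case: (cov (Some (k,h,k))) => // H; rewrite H in Hh.
case: (cov (Some (k, g*h, k))) => H.
  have := mul_in hX H (inv_in hX hXX).
  by rewrite mulSS eqxx mulgK (negbTE Hg).
have := mul_in hY (inv_in hY gY) H.
by rewrite mulSS eqxx mulKg (negbTE Hh).
Qed.

End Two.



Lemma mul_full (X : {set T}) (hX : inverse_subsemigroup mul X) k l g :
  full X k k -> Some (k,g,l) \in X -> full X k l.
Proof.
move=> Hk H h; have := mul_in hX (Hk (h * g^-1)) H.
by rewrite mulSS eqxx mulgKV.
Qed.

Lemma pair_aux (X Y : {set T}) (hX : inverse_subsemigroup mul X)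
  (hY : inverse_subsemigroup mul Y) (cov : forall x, x \in X \/ x \in Y) k l :
  Some (k,1,l) \in X -> full X k k \/ full Y k k -> full X k l \/ full Y k l.
Proof.
move=> H1 [Hk|Hk]; first by left; apply: mul_full H1.
case: (boolP (Some (k,1,l) \in Y)) => HY; first by right; apply: mul_full HY.
left => g; case: (cov (Some (k,g,l))) => // H.
have := mul_in hY (Hk g^-1) H.
by rewrite mulSS eqxx mulVg (negbTE HY).
Qed.

Lemma full_trans (X : {set T}) (hX : inverse_subsemigroup mul X) k l m :
  full X k l -> full X l m -> full X k m.
Proof.
move=> H1 H2 g; have := mul_in hX (H1 g) (H2 1).
by rewrite mulSS eqxx mulg1.
Qed.

Lemma full_sym (X : {set T}) (hX : inverse_subsemigroup mul X) k l :
  full X k l -> full X l k.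
Proof.
move=> H g; have := inv_in hX (H g^-1); by rewrite invgK.
Qed.

Lemma two_full (X Y : {set T}) (hX : inverse_subsemigroup mul X)
  (hY : inverse_subsemigroup mul Y) (cov : forall x, x \in X \/ x \in Y) k l :
  full X k l \/ full Y k l.
Proof.
case: (cov (Some (k,1,l))) => H.
  by apply: pair_aux => //; apply: diag_full.
have cov' : forall x, x \in Y \/ x \in X by move=> x; case: (cov x); auto.
have := @pair_aux Y X hY hX cov' k l H.
case; first by case: (diag_full hX hY cov k); auto.
  by right.
by left.
Qed.

Lemma comb (FA FB : K -> K -> Prop)
  (sA : forall k l, FA k l -> FA l k) (tA : forall k l m, FA k l -> FA l m -> FA k m)
  (sB : forall k l, FB k l -> FB l k) (tB : forall k l m, FB k l -> FB l m -> FB k m)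
  (cv : forall k l, FA k l \/ FB k l) :
  (forall k l, FA k l) \/ (forall k l, FB k l).
Proof.
destruct (classic (forall k l, FA k l)) as [|nA]; first by left.
right => c d.
destruct (classic (FB c d)) as [|nB]; first by [].
exfalso; apply: nA => a b.
have Acd : FA c d by case: (cv c d).
have key : forall x, FA x c.
  move=> x; case: (cv x c) => // Bxc.
  case: (cv x d) => [Axd|Bxd]; first by apply: tA Axd (sA _ _ Acd).
  by exfalso; apply: nB; apply: tB (sB _ _ Bxc) Bxd.
exact: tA (key a) (sA _ _ (key b)).
Qed.

Lemma full_all (X : {set T}) (hX : inverse_subsemigroup mul X) (a b : K) :
  a != b -> (forall k l, full X k l) -> X = [set: T].
Proof.
move=> ab H; apply/setP => x; rewrite in_setT.
case: x => [[[k g] l]|]; first by apply: H.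
have := mul_in hX (H a b 1) (H a b 1).
by rewrite mulSS eq_sym (negbTE ab).
Qed.

End S.

Theorem mainTheorem15 (K : finType) (gT : finGroupType) (hK : 3 <= #|K|) :
  sigma_i_eq (@rees_mul K gT (@diagP K gT)) 3.
Proof.
pose p (i : 'I_3) : K := enum_val (widen_ord hK i).
have pinj : injective p.
  by move=> i j /enum_val_inj /(congr1 val) /= /val_inj.
have p01 : p ord0 != p (lift ord0 ord0) by apply/eqP => /pinj.
split=> //; split.
  pose F (i : 'I_3) := [set x : rees_elt K gT |
     if x is Some (k,_,l) then (k != p i) && (l != p i) else true].
  exists F; split.
    move=> i; split; last first.
      apply/negP => /eqP E.
      have : Some (p i, 1, p i) \in F i by rewrite E in_setT.
      by rewrite inE eqxx.
    split; first by apply/set0Pn; exists None; rewrite inE.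
    split.
      move=> [[[k g] l]|] [[[m h] n]|] //; rewrite !inE //.
      by rewrite mulSS; case: (l == m) => //; case/andP=> -> _ /andP [_ ->].
    move=> [[[k g] l]|] [[[m h] n]|]; rewrite ?inE //.
    move=> /andP [Hk Hl]; rewrite mulSS; case: eqP => // <-.
    rewrite mulSS; case: eqP => // -> _ _; by rewrite Hk Hl.
  apply/setP => x; rewrite in_setT; apply/bigcupP.
  case: x => [[[k g] l]|]; last by exists ord0; rewrite ?inE.
  have [i Hi] : exists i, (p i != k) && (p i != l).
    case: (boolP ((p ord0 != k) && (p ord0 != l))) => H0; first by exists ord0.
    case: (boolP ((p (lift ord0 ord0) != k) && (p (lift ord0 ord0) != l))) => H1.
      by eexists; exact H1.
    case: (boolP ((p ord_max != k) && (p ord_max != l))) => H2.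
      by eexists; exact H2.
    exfalso; rewrite !negb_and !negbK in H0 H1 H2.
    have d1 : p ord0 != p ord_max by apply/eqP => /pinj.
    have d2 : p (lift ord0 ord0) != p ord_max by apply/eqP => /pinj.
    move: p01 d1 d2.
    by case/orP: H0 => /eqP ->; case/orP: H1 => /eqP ->;
       case/orP: H2 => /eqP ->; rewrite ?eqxx.
  by exists i; rewrite // inE eq_sym (eq_sym l).
move=> [|[|[|m]]] // _ _ [F [HF HU]].
  have := (HF ord0).2; rewrite -HU big_ord1.
  by rewrite eqxx.
have cov : forall x, x \in F ord0 \/ x \in F ord_max.
  move=> x; have : x \in \bigcup_(i < 2) F i by rewrite HU in_setT.
  case/bigcupP => i _.
  have : i = ord0 \/ i = ord_max.
    by case: i => [[|[|?]] ?] //; [left|right]; apply/val_inj.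
  by case=> ->; auto.
have hA := (HF ord0).1; have hB := (HF ord_max).1.
case: (comb (@full_sym _ _ _ hA) (@full_trans _ _ _ hA)
            (@full_sym _ _ _ hB) (@full_trans _ _ _ hB) (two_full hA hB cov)).
  by move=> H; have := (HF ord0).2; rewrite (full_all hA p01 H) eqxx.
by move=> H; have := (HF ord_max).2; rewrite (full_all hB p01 H) eqxx.
Qed.
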